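(* Let $\Gamma$ be a group, $S$ a $\Gamma$-graded semigroup with local units, and $S_\Gamma$ the corresponding stable graded Rees matrix semigroup. Then: (1) $E(S_\Gamma)=\{e_{\alpha\alpha}(u):u\in E(S),\alpha\in\Gamma\}$; (2) $S_\Gamma$ has local units; (3) $S_\Gamma$ is strongly graded; (4) the map $\phi:S\#\Gamma\to(S_\Gamma)_\varepsilon$ with $\phi(sP_\alpha)=e_{\deg(s)\alpha,\alpha}(s)$ for $sP_\alpha\neq0$ and $\phi(0)=0$ is a semigroup isomorphism; (5) $S$ is an inverse semigroup if and only if $S_\Gamma$ is an inverse semigroup.
   Context: Semigroups have a zero; $S$ is $\Gamma$-graded via $\deg:S\setminus\{0\}\to\Gamma$ with $\deg(st)=\deg(s)\deg(t)$ whenever $st\neq0$; $S_\alpha=\deg^{-1}(\alpha)\cup\{0\}$; strongly graded means $S_\alpha S_\beta=S_{\alpha\beta}$; local units: each $s$ has idempotents $u,v$ with $us=s=sv$; $E(\cdot)$ denotes idempotents. $S_\Gamma=\{e_{\alpha\beta}(s):\alpha,\beta\in\Gamma,s\in S\}$, where all $e_{\alpha\beta}(0)$ are identified with a single zero $0$, with multiplication $e_{\alpha\beta}(s)e_{\delta\gamma}(t)=e_{\alpha\gamma}(st)$ if $\beta=\delta$ and $0$ otherwise, and $\Gamma$-grading $\deg(e_{\alpha\beta}(s))=\alpha^{-1}\deg(s)\beta$ for nonzero elements. The smash product $S\#\Gamma=\{sP_\alpha:s\in S\setminus\{0\},\alpha\in\Gamma\}\cup\{0\}$ has product $(sP_\alpha)(tP_\beta)=stP_\beta$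 if $st\neq0$ and $t\in S_{\alpha\beta^{-1}}$, else $0$. *)

(* Defs.v *)
From Stdlib Require Import ClassicalEpsilon.


Definition dec (P : Prop) : {P} + {~ P} := excluded_middle_informative P.

Definition sg0 {T : Type} (mul : T -> T -> T) (z : T) : Prop :=
  (forall x y w, mul x (mul y w) = mul (mul x y) w) /\
  (forall x, mul z x = z) /\ (forall x, mul x z = z).

Definition is_group {G : Type} (op : G -> G -> G) (e : G) (inv : G -> G) : Prop :=
  (forall x y w, op x (op y w) = op (op x y) w) /\
  (forall x, op e x = x /\ op x e = x) /\
  (forall x, op (inv x) x = e /\ op x (inv x) = e).

Definition idempotent {T : Type} (mul : T -> T -> T) (x : T) : Prop := mul x x = x.

Definition has_local_units {T : Type} (mul : T -> T -> T) : Prop :=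
  forall s, exists u v, idempotent mul u /\ idempotent mul v /\
                        mul u s = s /\ mul s v = s.

(* Gamma-grading: deg is only meaningful on nonzero elements;
   deg (st) = deg s deg t whenever st <> 0 *)
Definition graded {T G : Type} (mul : T -> T -> T) (z : T) (op : G -> G -> G)
  (deg : T -> G) : Prop :=
  forall s t, mul s t <> z -> deg (mul s t) = op (deg s) (deg t).

Definition component {T G : Type} (z : T) (deg : T -> G) (a : G) (x : T) : Prop :=
  x = z \/ (x <> z /\ deg x = a).

Definition strongly_graded {T G : Type} (mul : T -> T -> T) (z : T)
  (op : G -> G -> G) (deg : T -> G) : Prop :=
  forall a b x, component z deg (op a b) x <->
    exists y w, component z deg a y /\ component z deg b w /\ x = mul y w.

Definition inverse_semigroup {T : Type} (mul : T -> T -> T) : Prop :=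
  forall s, exists! t, mul (mul s t) s = s /\ mul (mul t s) t = t.

Definition nz {S : Type} (z : S) := {s : S | s <> z}.

(* Stable graded Rees matrix semigroup S_Gamma: None is the zero,
   Some (a, b, s) is e_{ab}(s) with s <> 0. *)
Arguments nz {S} z.
Definition SGam (G S : Type) (z : S) : Type := option (G * G * nz z).

(* e_{ab}(s), with all e_{ab}(0) identified with the zero *)
Definition eRees {G S : Type} (z : S) (a b : G) (s : S) : SGam G S z :=
  match dec (s = z) with
  | left _ => None
  | right h => Some (a, b, exist _ s h)
  end.

Definition rees_mul {G S : Type} (mul : S -> S -> S) (z : S)
  (x y : SGam G S z) : SGam G S z :=
  match x, y with
  | Some (a, b, s), Some (d, c, t) =>
      if dec (b = d) then eRees z a c (mul (proj1_sig s) (proj1_sig t)) else None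
  | _, _ => None
  end.

(* deg (e_{ab}(s)) = a^{-1} deg(s) b on nonzero elements (value e on 0 irrelevant) *)
Definition rees_deg {G S : Type} (op : G -> G -> G) (e : G) (inv : G -> G)
  (deg : S -> G) (z : S) (x : SGam G S z) : G :=
  match x with
  | Some (a, b, s) => op (op (inv a) (deg (proj1_sig s))) b
  | None => e
  end.

(* Smash product S # Gamma: None is 0, Some (s, a) is s P_a with s <> 0 *)
Definition Smash (G S : Type) (z : S) : Type := option (nz z * G).

Definition smash_mul {G S : Type} (mul : S -> S -> S) (z : S)
  (op : G -> G -> G) (inv : G -> G) (deg : S -> G)
  (x y : Smash G S z) : Smash G S z :=
  match x, y with
  | Some (s, a), Some (t, b) =>
      match dec (mul (proj1_sig s) (proj1_sig t) = z) with
      | left _ => None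
      | right h =>
          if dec (deg (proj1_sig t) = op a (inv b))
          then Some (exist _ (mul (proj1_sig s) (proj1_sig t)) h, b)
          else None
      end
  | _, _ => None
  end.

Definition phi {G S : Type} (z : S) (op : G -> G -> G) (deg : S -> G)
  (x : Smash G S z) : SGam G S z :=
  match x with
  | Some (s, a) => eRees z (op (deg (proj1_sig s)) a) a (proj1_sig s)
  | None => None
  end.

(* Main.v *)
Require Import Defs.
From Stdlib Require Import Classical ProofIrrelevance.

Section Rees.
Variables (G S : Type) (mul : S -> S -> S) (z : S).
Hypothesis HS : sg0 mul z.

Lemma eR_None (a b : G) s : s = z -> eRees z a b s = None.
Proof. intros ->. unfold eRees. destruct (dec (z = z)); congruence. Qed.

Lemma eR_Some (a b : G) s (h : s <> z) : eRees z a b s = Some (a, b, exist _ s h).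
Proof.
  unfold eRees. destruct (dec (s = z)) as [e|n]; [contradiction|].
  do 2 f_equal. apply f_equal. apply proof_irrelevance.
Qed.

Lemma eR_cases (x : SGam G S z) :
  x = None \/ exists a b s, s <> z /\ x = eRees z a b s.
Proof.
  destruct x as [[[a b] [s h]]|]; [right|left; reflexivity].
  exists a, b, s. split; [exact h|]. rewrite (eR_Some a b s h). reflexivity.
Qed.

Lemma eR_inj (a b a' b' : G) s s' :
  s <> z -> eRees z a b s = eRees z a' b' s' -> a = a' /\ b = b' /\ s = s'.
Proof.
  intros h H. destruct (classic (s' = z)) as [E|h'].
  - rewrite (eR_Some a b s h), (eR_None a' b' s' E) in H. discriminate.
  - rewrite (eR_Some a b s h), (eR_Some a' b' s' h') in H. inversion H. auto.
Qed.

Lemma eR_neq (a b : G) s : s <> z -> eRees z a b s <> None.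
Proof. intros h. rewrite (eR_Some a b s h). discriminate. Qed.

Lemma mul_None_l (x : SGam G S z) : rees_mul mul z None x = None.
Proof. reflexivity. Qed.
Lemma mul_None_r (x : SGam G S z) : rees_mul mul z x None = None.
Proof. destruct x as [[[? ?] ?]|]; reflexivity. Qed.

Lemma mul_eR (a b c d : G) s t :
  rees_mul mul z (eRees z a b s) (eRees z d c t) =
  if dec (b = d) then eRees z a c (mul s t) else None.
Proof.
  destruct HS as [_ [Hl Hr]].
  destruct (classic (s = z)) as [Es|hs].
  - rewrite (eR_None a b s Es), mul_None_l. destruct dec; auto.
    rewrite Es, Hl. symmetry. apply eR_None. reflexivity.
  - destruct (classic (t = z)) as [Et|ht].
    + rewrite (eR_None d c t Et), mul_None_r. destruct dec; auto.
      rewrite Et, Hr. symmetry. apply eR_None. reflexivity.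
    + rewrite (eR_Some a b s hs), (eR_Some d c t ht). reflexivity.
Qed.

Lemma inv_forward (a b : G) s t :
  mul (mul s t) s = s -> mul (mul t s) t = t ->
  rees_mul mul z (rees_mul mul z (eRees z a b s) (eRees z b a t)) (eRees z a b s) = eRees z a b s /\
  rees_mul mul z (rees_mul mul z (eRees z b a t) (eRees z a b s)) (eRees z b a t) = eRees z b a t.
Proof.
  intros H1 H2. rewrite !mul_eR.
  destruct (dec (b = b)); [|congruence]. destruct (dec (a = a)); [|congruence].
  rewrite !mul_eR.
  destruct (dec (b = b)); [|congruence]. destruct (dec (a = a)); [|congruence].
  rewrite H1, H2. auto.
Qed.

Lemma inv_analysis (a b : G) s (y : SGam G S z) : s <> z ->
  rees_mul mul z (rees_mul mul z (eRees z a b s) y) (eRees z a b s) = eRees z a b s ->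
  rees_mul mul z (rees_mul mul z y (eRees z a b s)) y = y ->
  exists t, t <> z /\ y = eRees z b a t /\ mul (mul s t) s = s /\ mul (mul t s) t = t.
Proof.
  intros hs Y1 Y2.
  destruct (eR_cases y) as [->|[c [d [t [ht ->]]]]].
  - rewrite mul_None_r, mul_None_l in Y1. symmetry in Y1. now apply eR_neq in Y1.
  - rewrite mul_eR in Y1. destruct (dec (b = c)) as [<-|n];
      [|rewrite mul_None_l in Y1; symmetry in Y1; now apply eR_neq in Y1].
    rewrite mul_eR in Y1. destruct (dec (d = a)) as [->|n];
      [|symmetry in Y1; now apply eR_neq in Y1].
    symmetry in Y1. apply eR_inj in Y1; [|exact hs]. destruct Y1 as [_ [_ Y1]].
    rewrite mul_eR in Y2. destruct (dec (a = a)) as [_|n]; [|congruence].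
    rewrite mul_eR in Y2. destruct (dec (b = b)) as [_|n]; [|congruence].
    symmetry in Y2. apply eR_inj in Y2; [|exact ht]. destruct Y2 as [_ [_ Y2]].
    exists t. auto.
Qed.

End Rees.

Section Grp.
Variables (G : Type) (op : G -> G -> G) (e : G) (inv : G -> G).
Hypothesis HG : is_group op e inv.
Lemma gA1 x y w : op (op x y) w = op x (op y w).
Proof. destruct HG as [A _]. now rewrite A. Qed.
Lemma gidl x : op e x = x. Proof. apply HG. Qed.
Lemma gidr x : op x e = x. Proof. apply HG. Qed.
Lemma ginvl x : op (inv x) x = e. Proof. apply HG. Qed.
Lemma ginvr x : op x (inv x) = e. Proof. apply HG. Qed.
Lemma gLinv x y : op (inv x) (op x y) = y.
Proof. now rewrite <- gA1, ginvl, gidl. Qed.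
Lemma gRinv x y : op x (op (inv x) y) = y.
Proof. now rewrite <- gA1, ginvr, gidl. Qed.
Lemma guniq_inv x y : op x y = e -> y = inv x.
Proof. intros H. rewrite <- (gLinv x y), H, gidr. reflexivity. Qed.
Lemma ginvop x y : inv (op x y) = op (inv y) (inv x).
Proof. symmetry. apply guniq_inv. rewrite gA1, gRinv. apply ginvr. Qed.
Lemma ginvinv x : inv (inv x) = x.
Proof. symmetry. apply guniq_inv. apply ginvl. Qed.
Lemma ginve : inv e = e.
Proof. symmetry. apply guniq_inv. apply gidl. Qed.
End Grp.

Ltac gnorm HG := repeat progress (rewrite ?(gA1 _ _ _ _ HG), ?(ginvop _ _ _ _ HG), ?(ginvinv _ _ _ _ HG),
   ?(ginve _ _ _ _ HG), ?(gLinv _ _ _ _ HG), ?(gRinv _ _ _ _ HG), ?(ginvl _ _ _ _ HG),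
   ?(ginvr _ _ _ _ HG), ?(gidl _ _ _ _ HG), ?(gidr _ _ _ _ HG)).

Theorem proposition3p7 (G : Type) (op : G -> G -> G) (e : G) (inv : G -> G)
  (S : Type) (mul : S -> S -> S) (z : S) (deg : S -> G)
  (HG : is_group op e inv) (HS : sg0 mul z) (Hdeg : graded mul z op deg)
  (Hlu : has_local_units mul) :
  (* (1) *)
  (forall x : SGam G S z, idempotent (rees_mul mul z) x <->
     exists (u : S) (a : G), idempotent mul u /\ x = eRees z a a u) /\
  (* (2) *)
  has_local_units (rees_mul (G:=G) mul z) /\
  (* (3) *)
  strongly_graded (rees_mul mul z) None op (rees_deg op e inv deg z) /\
  (* (4) phi : S # Gamma -> (S_Gamma)_e is a semigroup isomorphism *)
  ((forall x : Smash G S z, component None (rees_deg op e inv deg z) e (phi z op deg x)) /\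
   (forall x y : Smash G S z,
      phi z op deg (smash_mul mul z op inv deg x y)
      = rees_mul mul z (phi z op deg x) (phi z op deg y)) /\
   (forall x y : Smash G S z, phi z op deg x = phi z op deg y -> x = y) /\
   (forall y : SGam G S z, component None (rees_deg op e inv deg z) e y ->
      exists x : Smash G S z, phi z op deg x = y)) /\
  (* (5) *)
  (inverse_semigroup mul <-> inverse_semigroup (rees_mul (G:=G) mul z)).
Proof.
  pose proof HS as HS'. destruct HS' as [_ [Hl Hr]].
  assert (degR : forall (a b : G) s, s <> z ->
     rees_deg op e inv deg z (eRees z a b s) = op (op (inv a) (deg s)) b).
  { intros a b s h. rewrite (eR_Some _ _ _ a b s h). reflexivity. }
  assert (degid : forall v, mul v v = v -> v <> z -> deg v = e).
  { intros v Hv hv. assert (E := Hdeg v v). rewrite Hv in E. specialize (E hv).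
    rewrite <- (gLinv _ _ _ _ HG (deg v) (deg v)), <- E, (ginvl _ _ _ _ HG). reflexivity. }
  split; [|split; [|split; [|split]]].
  -
    intros x. split.
    + intros H. destruct (eR_cases _ _ _ x) as [->|[a [b [s [hs ->]]]]].
      * exists z, e. split; [apply Hl|]. symmetry. now apply eR_None.
      * unfold idempotent in H. rewrite (mul_eR _ _ _ _ HS) in H.
        destruct (dec (b = a)) as [->|n]; [|symmetry in H; now apply eR_neq in H].
        destruct (classic (mul s s = z)) as [E|E].
        -- rewrite (eR_None _ _ _ a a _ E) in H. symmetry in H. now apply eR_neq in H.
        -- apply eR_inj in H; [|exact E]. destruct H as [_ [_ H]].
           exists s, a. auto.
    + intros [u [a [Hu ->]]]. unfold idempotent. rewrite (mul_eR _ _ _ _ HS).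
      destruct (dec (a = a)); [|congruence]. now rewrite Hu.
  -
    intros x. destruct (eR_cases _ _ _ x) as [->|[a [b [s [hs ->]]]]].
    + exists None, None. unfold idempotent. auto.
    + destruct (Hlu s) as [u [v [Hu [Hv [Hus Hsv]]]]].
      exists (eRees z a a u), (eRees z b b v). unfold idempotent.
      rewrite !(mul_eR _ _ _ _ HS).
      destruct (dec (a = a)); [|congruence]. destruct (dec (b = b)); [|congruence].
      rewrite Hu, Hv, Hus, Hsv. auto.
  -
    intros a b x. split.
    + intros [->|[hx Hx]].
      * exists None, None. split; [left; reflexivity|]. split; [left; reflexivity|]. reflexivity.
      * destruct (eR_cases _ _ _ x) as [->|[c [d [s [hs ->]]]]]; [congruence|].
        rewrite degR in Hx by exact hs.
        destruct (Hlu s) as [u [v [Hu [Hv [Hus Hsv]]]]].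
        assert (hv : v <> z). { intros ->. apply hs. rewrite <- Hsv. apply Hr. }
        set (g := op (op (inv (deg s)) c) a).
        exists (eRees z c g s), (eRees z g d v).
        split; [|split].
        -- right. split; [now apply eR_neq|]. rewrite degR by exact hs.
           unfold g. gnorm HG. reflexivity.
        -- right. split; [now apply eR_neq|]. rewrite degR by exact hv.
           rewrite (degid v Hv hv). unfold g. gnorm HG. gnorm HG.
           rewrite (gA1 _ _ _ _ HG) in Hx. rewrite Hx. gnorm HG. reflexivity.
        -- rewrite (mul_eR _ _ _ _ HS). destruct (dec (g = g)); [|congruence].
           now rewrite Hsv.
    + intros [y [w [Hy [Hw ->]]]].
      destruct Hy as [->|[hy Hy]]; [left; reflexivity|].
      destruct Hw as [->|[hw Hw]]; [left; apply mul_None_r|].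
      destruct (eR_cases _ _ _ y) as [->|[c [g [s [hs ->]]]]]; [congruence|].
      destruct (eR_cases _ _ _ w) as [->|[g' [d [t [ht ->]]]]]; [congruence|].
      rewrite degR in Hy, Hw by assumption.
      rewrite (mul_eR _ _ _ _ HS). destruct (dec (g = g')) as [<-|n]; [|left; reflexivity].
      destruct (classic (mul s t = z)) as [E|E]; [left; now apply eR_None|].
      right. split; [now apply eR_neq|]. rewrite degR by exact E.
      rewrite (Hdeg s t E), <- Hy, <- Hw. gnorm HG. reflexivity.
  -
    split; [|split; [|split]].
    + intros [[[s hs] a]|]; [|left; reflexivity]. simpl. right.
      split; [now apply eR_neq|]. rewrite degR by exact hs. gnorm HG. reflexivity.
    + intros [[[s hs] a]|] [[[t ht] b]|]; simpl; try reflexivity;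
        [| rewrite ?mul_None_r; reflexivity].
      rewrite (mul_eR _ _ _ _ HS).
      destruct (dec (mul s t = z)) as [E|E].
      * simpl. destruct dec; [symmetry; now apply eR_None|reflexivity].
      * destruct (dec (deg t = op a (inv b))) as [D|D]; simpl;
          destruct (dec (a = op (deg t) b)) as [D'|D'].
        -- rewrite (Hdeg s t E), D'. gnorm HG. reflexivity.
        -- exfalso. apply D'. rewrite D. gnorm HG. reflexivity.
        -- exfalso. apply D. rewrite D'. gnorm HG. reflexivity.
        -- reflexivity.
    + intros [[[s hs] a]|] [[[t ht] b]|]; simpl; intros H.
      * apply eR_inj in H; [|exact hs]. destruct H as [_ [-> ->]].
        do 3 f_equal. apply proof_irrelevance.
      * exfalso. now apply eR_neq in H.
      * exfalso. symmetry in H. now apply eR_neq in H.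
      * reflexivity.
    + intros y [->|[hy Hy]]; [exists None; reflexivity|].
      destruct (eR_cases _ _ _ y) as [->|[c [d [s [hs ->]]]]]; [congruence|].
      rewrite degR in Hy by exact hs.
      exists (Some (exist _ s hs, d)). simpl.
      assert (C : op (deg s) d = c).
      { rewrite <- (gidr _ _ _ _ HG c), <- Hy. gnorm HG. reflexivity. }
      now rewrite C.
  -
    split.
    + intros H x. destruct (eR_cases _ _ _ x) as [->|[a [b [s [hs ->]]]]].
      * exists None. split; [split; reflexivity|].
        intros y [_ Y2]. rewrite mul_None_r, mul_None_l in Y2. exact Y2.
      * destruct (H s) as [t [[H1 H2] Hu]].
        exists (eRees z b a t). split; [now apply inv_forward|].
        intros y [Y1 Y2].
        destruct (inv_analysis _ _ _ _ HS a b s y hs Y1 Y2) as [t' [_ [-> [T1 T2]]]].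
        now rewrite (Hu t' (conj T1 T2)).
    + intros H s. destruct (classic (s = z)) as [->|hs].
      * exists z. split; [split; now rewrite Hl|].
        intros t [_ T2]. rewrite Hr, Hl in T2. exact T2.
      * destruct (H (eRees z e e s)) as [y [[Y1 Y2] Yu]].
        destruct (inv_analysis _ _ _ _ HS e e s y hs Y1 Y2) as [t [ht [-> [T1 T2]]]].
        exists t. split; [auto|].
        intros t' [U1 U2].
        assert (ht' : t' <> z). { intros ->. apply hs. rewrite <- U1, Hr. apply Hl. }
        specialize (Yu (eRees z e e t') (inv_forward _ _ _ _ HS e e s t' U1 U2)).
        apply eR_inj in Yu; [|exact ht]. apply Yu.
Qed.
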